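(* In the directed variant of the greedy routing network creation game on any finite point set in any metric space, there is no best response cycle.
   Context: Let $\mathcal P$ be a finite set of $n\ge2$ points (agents) in a metric space with metric $d$. In the directed variant each agent $u$ chooses a strategy $S_u\subseteq\{(u,v):v\in\mathcal P\setminus\{u\}\}$ of directed edges, which it owns. A profile $\mathbf s=(S_u)_u$ induces the directed network $G(\mathbf s)=(\mathcal P,\bigcup_u S_u)$. A greedy routing path from $u$ to $w$ is a directed path $(x_1=u,\dots,x_j=w)$ in $G(\mathbf s)$ with $d(x_i,w)>d(x_{i+1},w)$ for all $i$; $u$ is greedy connected if it has a greedy routing path to every other agent. The cost of $u$ is $c_u(\mathbf s)=|S_u|$ if $u$ is greedy connected and $\infty$ otherwise. A best response of $u$ in $\mathbf s$ is a strategy minimizing $c_u(S'_u,\mathbf s_{-u})$ over all strategies $S'_u$. A best response path is a sequence of profiles $\mathbf s_0,\dots,\mathbf s_k$ where each $\mathbf s_i$ arises from $\mathbf s_{i-1}$ by one agent switching (from a non-best-response strategy) to a best response; a best response cycle is a best response path with $k\ge1$ and $\mathbf s_0=\mathbf s_k$. *)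

(* Defs.v *)
From mathcomp Require Import all_boot all_order all_algebra.
Set Implicit Arguments. Unset Strict Implicit. Unset Printing Implicit Defensive.
Import Order.TTheory GRing.Theory Num.Theory.
Local Open Scope ring_scope.

Definition is_metric (R : realFieldType) (T : finType) (d : T -> T -> R) : Prop :=
  [/\ (forall x y, d x y = 0 <-> x = y),
      (forall x y, d x y = d y x) &
      (forall x y z, d x z <= d x y + d y z)].

(* A strategy profile: agent u owns the directed edges (u,v) for v \in s u. *)
Definition profile (T : finType) := {ffun T -> {set T}}.

Definition valid_strategy (T : finType) (u : T) (S : {set T}) : bool := u \notin S.
Definition valid_profile (T : finType) (s : profile T) : Prop :=
  forall u, valid_strategy u (s u).

Definition greedy_step (R : realFieldType) (T : finType) (d : T -> T -> R)
  (s : profile T) (w : T) : rel T :=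
  fun x y => (y \in s x) && (d y w < d x w).

Definition greedy_path (R : realFieldType) (T : finType) (d : T -> T -> R)
  (s : profile T) (u w : T) : Prop :=
  exists p : seq T, path (greedy_step d s w) u p /\ last u p = w.

Definition greedy_connected (R : realFieldType) (T : finType) (d : T -> T -> R)
  (s : profile T) (u : T) : Prop :=
  forall w, w != u -> greedy_path d s u w.

(* The cost c_u(s) is |S_u| if u is greedy connected in G(s) and infinity
   otherwise.  cost_le d u s1 s2  means  c_u(s1) <= c_u(s2)  in N \cup {oo}. *)
Definition cost_le (R : realFieldType) (T : finType) (d : T -> T -> R)
  (u : T) (s1 s2 : profile T) : Prop :=
  greedy_connected d s2 u -> greedy_connected d s1 u /\ (#|s1 u| <= #|s2 u|)%N.

Definition upd (T : finType) (s : profile T) (u : T) (S : {set T}) : profile T :=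
  [ffun v => if v == u then S else s v].

Definition best_response (R : realFieldType) (T : finType) (d : T -> T -> R)
  (s : profile T) (u : T) (S : {set T}) : Prop :=
  valid_strategy u S /\
  forall S', valid_strategy u S' -> cost_le d u (upd s u S) (upd s u S').

Definition br_step (R : realFieldType) (T : finType) (d : T -> T -> R)
  (s s' : profile T) : Prop :=
  exists u : T,
    [/\ ~ best_response d s u (s u),
        best_response d s u (s' u) &
        forall v, v != u -> s' v = s v].

Definition br_path (R : realFieldType) (T : finType) (d : T -> T -> R)
  (k : nat) (ss : nat -> profile T) : Prop :=
  (forall i, (i <= k)%N -> valid_profile (ss i)) /\
  (forall i, (i < k)%N -> br_step d (ss i) (ss i.+1)).

Definition br_cycle (R : realFieldType) (T : finType) (d : T -> T -> R)
  (k : nat) (ss : nat -> profile T) : Prop :=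
  [/\ (1 <= k)%N, br_path d k ss & ss 0%N = ss k].

(* Main.v *)
Require Import Defs.
From mathcomp Require Import all_boot all_order all_algebra.
From mathcomp Require Import lra.
Set Implicit Arguments. Unset Strict Implicit. Unset Printing Implicit Defensive.
Import Order.TTheory GRing.Theory Num.Theory.
Local Open Scope ring_scope.

Lemma d_ge0 (R : realFieldType) (T : finType) (d : T -> T -> R) :
  is_metric d -> forall x y, 0 <= d x y.
Proof.
case=> h0 hs ht x y; have := ht x y x; rewrite (hs y x).
by have [_ ->] := h0 x x => // H; lra.
Qed.

Lemma d_neq (R : realFieldType) (T : finType) (d : T -> T -> R) :
  is_metric d -> forall x w, d x w < d w w -> False.
Proof.
move=> hd x w; have [h0 _ _] := hd; have [_ ->] := h0 w w => //.
by have := d_ge0 hd x w => H1 H2; lra.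
Qed.

Lemma gp_transfer (R : realFieldType) (T : finType) (d : T -> T -> R)
  (s s2 : profile T) (w : T) (D : R) :
  (forall z, d z w < D -> s2 z = s z) ->
  forall v, greedy_path d s v w -> d v w < D -> greedy_path d s2 v w.
Proof.
move=> hs v [p [hp hl]]; elim: p v hp hl => [|y p IH] v /=.
  by move=> _ <- _; exists [::].
case/andP=> /andP[hy hdy] hp hl hv.
have [q [hq hql]] := IH y hp hl (lt_trans hdy hv).
exists (y :: q); split => //=; rewrite hq andbT /greedy_step hs // hy.
by rewrite hdy.
Qed.

Lemma gp_upd_equiv (R : realFieldType) (T : finType) (d : T -> T -> R)
  (s t : profile T) (u : T) (S : {set T}) :
  is_metric d ->
  (forall x w, greedy_path d s x w -> greedy_path d t x w) ->
  forall w, greedy_path d (upd s u S) u w -> greedy_path d (upd t u S) u w.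
Proof.
move=> hd hst w [[|y p] [hp hl]].
  by move: hl => /= <-; exists [::].
move: hp => /= /andP[/andP[hy hdy] hp].
have hne : forall (r : profile T) z, d z w < d u w -> upd r u S z = r z.
  move=> r z hz; rewrite /upd ffunE; case: eqP => // ez.
  by move: hz; rewrite ez ltxx.
have g1 : greedy_path d s y w.
  apply: (@gp_transfer R T d (upd s u S) s w (d u w)) => //.
    by move=> z hz; rewrite hne.
  by exists p.
have [q [hq hql]] := gp_transfer (fun z hz => hne t z hz) (hst _ _ g1) hdy.
exists (y :: q); split => //=; rewrite hq andbT /greedy_step hdy andbT.
by move: hy; rewrite /upd !ffunE eqxx.
Qed.

Lemma br_equiv (R : realFieldType) (T : finType) (d : T -> T -> R)
  (s t : profile T) (u : T) (S : {set T}) :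
  is_metric d ->
  (forall x w, greedy_path d s x w <-> greedy_path d t x w) ->
  best_response d s u S -> best_response d t u S.
Proof.
move=> hd hst [hv hb]; split => // S' hS' hc.
have conn : forall (a b : profile T) S0,
    (forall x w, greedy_path d a x w -> greedy_path d b x w) ->
    greedy_connected d (upd a u S0) u -> greedy_connected d (upd b u S0) u.
  move=> a b S0 hab hc0 w hw; exact: gp_upd_equiv hd hab w (hc0 w hw).
have [h1 h2] := hb S' hS' (conn t s S' (fun x w => (hst x w).2) hc).
split; first exact: conn s t S (fun x w => (hst x w).1) h1.
by move: h2; rewrite /upd !ffunE eqxx.
Qed.

Lemma br_conn (R : realFieldType) (T : finType) (d : T -> T -> R)
  (s : profile T) (u : T) (S : {set T}) :
  is_metric d -> best_response d s u S -> greedy_connected d (upd s u S) u.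
Proof.
move=> hd [_ hb].
have hv : valid_strategy u [set~ u] by rewrite /valid_strategy !inE eqxx.
suff H : greedy_connected d (upd s u [set~ u]) u by case: (hb _ hv H).
move=> w hw; exists [:: w]; split => //=.
rewrite andbT /greedy_step /upd ffunE eqxx !inE hw /=.
have [h0 _ _] := hd; have [_ ->] := h0 w w => //.
have := d_ge0 hd u w; rewrite le_eqVlt => /orP[/eqP H|//].
by move: hw; rewrite (proj1 (h0 u w) (esym H)) eqxx.
Qed.

Lemma step_mono (R : realFieldType) (T : finType) (d : T -> T -> R)
  (s s' : profile T) :
  is_metric d -> br_step d s s' ->
  forall x w, greedy_path d s x w -> greedy_path d s' x w.
Proof.
move=> hd [u [_ hbr hoth]].
have es' : s' = upd s u (s' u).
  apply/ffunP => v; rewrite /upd ffunE; case: eqP => [->//|/eqP hv].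
  exact: hoth.
have hc : greedy_connected d s' u by have := br_conn hd hbr; rewrite -es'.
move=> x w [p [hp hl]]; elim: p x hp hl => [|y p IH] x /=.
  by move=> _ <-; exists [::].
case/andP=> /andP[hy hdy] hp hl.
have [q [hq hql]] := IH y hp hl.
case: (eqVneq x u) => [exu|hxu].
  case: (eqVneq w u) => [-> | hwu]; first by exists [::].
  by rewrite exu; apply: hc.
exists (y :: q); split => //=; rewrite hq andbT /greedy_step hoth // hy.
by rewrite hdy.
Qed.

Theorem mainTheorem7 (R : realFieldType) (T : finType) (d : T -> T -> R) :
  (1 < #|T|)%N -> is_metric d ->
  forall (k : nat) (ss : nat -> profile T), ~ br_cycle d k ss.
Proof.
move=> _ hd k ss [hk [_ hst] e0k].
have mono : forall i j, (i <= j <= k)%N -> forall x w,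
    greedy_path d (ss i) x w -> greedy_path d (ss j) x w.
  move=> i j /andP[hij hjk]; elim: j hij hjk => [|j IH].
    by rewrite leqn0 => /eqP -> _.
  rewrite leq_eqVlt => /orP[/eqP <- //|hij] hjk x w g.
  apply: (step_mono hd (hst j hjk)); apply: IH => //; exact: ltnW.
have eqv : forall i, (i <= k)%N -> forall x w,
    greedy_path d (ss i) x w <-> greedy_path d (ss 0%N) x w.
  move=> i hi x w; split => g.
    by rewrite e0k; apply: (mono i k) => //; rewrite hi leqnn.
  by apply: (mono 0%N i) => //; rewrite hi.
have [u [hnb hb hoth]] := hst 0%N hk.
have Pbr : forall i, (1 <= i <= k)%N -> best_response d (ss i) u (ss i u).
  elim=> [//|i IH] /andP[_ hik].
  have hi1 : (i < k)%N := hik.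
  case: (posnP i) => [i0|ipos].
    subst i; apply: (br_equiv hd (fun x w => iff_sym (eqv 1%N hk x w))).
    exact: hb.
  have Bi := IH (andb_true_intro (conj ipos (ltnW hik))).
  have [v [hnv _ hothv]] := hst i hi1.
  case: (eqVneq u v) => [euv|huv]; first by subst v.
  have eu : ss i.+1 u = ss i u by apply: hothv; apply/eqP => E; move: huv; rewrite E eqxx.
  rewrite eu.
  apply: (br_equiv hd _ Bi) => x w.
  have E1 := eqv i (ltnW hik) x w; have E2 := eqv i.+1 hik x w; tauto.
have Pk := Pbr k; rewrite hk leqnn in Pk.
have Pk' := Pk isT; rewrite -e0k in Pk'; exact: (hnb Pk').
Qed.
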